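(* There is an integer $N$ such that the following holds. Let $H$ be a connected graph with at least $N$ vertices that does not contain a subgraph isomorphic to $S_{4,4}$. Let $y_0$ be a vertex of $H$ with $\deg y_0\ge 4$, and let $y_0y_1y_2y_3y_4$ be a path in $H$ (distinct vertices with $y_i\sim y_{i+1}$). Then: 1. $\deg y_0=4$; 2. $y_0\sim y_2$, $y_0\nsim y_3$, and $y_0\nsim y_4$; 3. if $N(y_0)=\{y_1,y_2,y',y''\}$, then $y_1\nsim y'$ and $y_1\nsim y''$.
   Context: Graphs are finite simple graphs; $\sim$ denotes adjacency, $N(v)$ the set of neighbors of $v$, $\deg v=|N(v)|$. The sparkler graph $S_{4,4}$ is obtained from the star $K_{1,3}$ and the path $P_4$ on 4 vertices by adding an edge between an end vertex of $P_4$ and the central vertex of $K_{1,3}$. *)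

(* Defs.v *)
From mathcomp Require Import all_boot.
Set Implicit Arguments. Unset Strict Implicit. Unset Printing Implicit Defensive.

Definition simple_graph (T : finType) (e : rel T) : Prop :=
  symmetric e /\ irreflexive e.

Definition connected_graph (T : finType) (e : rel T) : Prop :=
  forall x y : T, connect e x y.

Definition nbhd (T : finType) (e : rel T) (v : T) : {set T} := [set w | e v w].

Definition deg (T : finType) (e : rel T) (v : T) : nat := #|nbhd e v|.

(* The sparkler S_{4,4} on vertex set 'I_8:
   0 = centre of K_{1,3}, 1,2,3 = its leaves,
   4-5-6-7 = the path P_4, with end vertex 4 joined to the centre 0. *)
Definition S44_edge (i j : 'I_8) : bool :=
  let a := nat_of_ord i in let b := nat_of_ord j in
  ((a, b) \in [:: (0,1); (0,2); (0,3); (0,4); (4,5); (5,6); (6,7)])%N.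

Definition S44 (i j : 'I_8) : bool := S44_edge i j || S44_edge j i.

(* H contains a (not necessarily induced) subgraph isomorphic to S_{4,4}:
   an injective map of vertices sending edges of S_{4,4} to edges of H. *)
Definition contains_S44 (T : finType) (e : rel T) : Prop :=
  exists f : 'I_8 -> T, injective f /\ forall i j, S44 i j -> e (f i) (f j).

(* Main.v *)
Require Import Defs.
From mathcomp Require Import all_boot zify.
Set Implicit Arguments. Unset Strict Implicit. Unset Printing Implicit Defensive.

Ltac bdecomp := repeat match goal with
  | H : is_true (_ && _) |- _ => case/andP: H => ? ?
  | H : is_true true |- _ => clear H end.
Ltac bsplit := repeat match goal with |- is_true (_ && _) => apply/andP; split end.
Ltac neqtac := bdecomp; bsplit; try done; try (rewrite eq_sym; done).

Section G.
Variables (T : finType) (e : rel T).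
Hypothesis esym : symmetric e.
Hypothesis eirr : irreflexive e.
Hypothesis noS : ~ contains_S44 e.

Lemma mkS44 c l1 l2 l3 p1 p2 p3 p4 : uniq [:: c;l1;l2;l3;p1;p2;p3;p4] ->
  e c l1 -> e c l2 -> e c l3 -> e c p1 -> e p1 p2 -> e p2 p3 -> e p3 p4 -> False.
Proof.
move=> U h1 h2 h3 h4 h5 h6 h7; apply: noS.
exists (fun i : 'I_8 => nth c [:: c;l1;l2;l3;p1;p2;p3;p4] i); split.
  by move=> i j /eqP; rewrite nth_uniq // => /eqP /val_inj.
move=> [[|[|[|[|[|[|[|[|i]]]]]]]] Hi] [[|[|[|[|[|[|[|[|j]]]]]]]] Hj] //=;
  rewrite /S44 /S44_edge /= => // _; first [done | rewrite esym; done].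
Qed.

Lemma pick3 (A : {set T}) : 2 < #|A| -> exists a b c, [/\ a \in A, b \in A, c \in A & uniq [:: a;b;c]].
Proof.
have U := enum_uniq A; have M x : (x \in enum A) = (x \in A) by rewrite mem_enum.
rewrite cardE; case E: (enum A) U M => [|a [|b [|c s]]] //= U M _.
exists a, b, c; rewrite -!M !inE !eqxx ?orbT; split => //.
move: U; rewrite /= !inE !negb_or => /andP[/andP[-> /andP[-> _]] /andP[/andP[-> _] _]].
done.
Qed.

Lemma cardU_le (A B : {set T}) : #|A :|: B| <= #|A| + #|B|.
Proof. by rewrite cardsU leq_subr. Qed.

Lemma card4 (a b c d : T) : #|[set a; b; c; d]| <= 4.
Proof.
apply: (leq_trans (cardU_le _ _)); rewrite cards1 addn1 ltnS.
apply: (leq_trans (cardU_le _ _)); rewrite cards1 addn1 ltnS.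
apply: (leq_trans (cardU_le _ _)); by rewrite !cards1.
Qed.

Lemma card3 (a b c : T) : #|[set a; b; c]| <= 3.
Proof.
apply: (leq_trans (cardU_le _ _)); rewrite cards1 addn1 ltnS.
apply: (leq_trans (cardU_le _ _)); by rewrite !cards1.
Qed.

Lemma sparkle c p1 p2 p3 p4 : uniq [:: c;p1;p2;p3;p4] ->
  e c p1 -> e p1 p2 -> e p2 p3 -> e p3 p4 ->
  2 < #|nbhd e c :\: [set p1;p2;p3;p4]| -> False.
Proof.
move=> U h1 h2 h3 h4 /pick3 [a [b [d [Ha Hb Hd Uabd]]]].
move: Ha Hb Hd; rewrite !inE => /andP[Pa Na] /andP[Pb Nb] /andP[Pd Nd].
apply: (@mkS44 c a b d p1 p2 p3 p4) => //.
have ca : c != a by apply: contraTneq Na => <-; rewrite eirr.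
have cb : c != b by apply: contraTneq Nb => <-; rewrite eirr.
have cd : c != d by apply: contraTneq Nd => <-; rewrite eirr.
move: U Uabd Pa Pb Pd; rewrite /= !inE !negb_or => *; neqtac.
Qed.


Lemma sparkle2 c p1 p2 p3 p4 : uniq [:: c;p1;p2;p3;p4] ->
  e c p1 -> e p1 p2 -> e p2 p3 -> e p3 p4 -> 3 < deg e c ->
  ~~ e c p2 -> ~~ e c p3 -> ~~ e c p4 -> False.
Proof.
move=> U h1 h2 h3 h4 D n2 n3 n4; apply: (sparkle U h1 h2 h3 h4).
have E : nbhd e c :\: [set p1;p2;p3;p4] = nbhd e c :\ p1.
  apply/setP => x; rewrite !inE; case hx: (e c x); rewrite ?andbF //.
  have -> : (x == p2) = false by apply/eqP => ?; subst; rewrite hx in n2.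
  have -> : (x == p3) = false by apply/eqP => ?; subst; rewrite hx in n3.
  have -> : (x == p4) = false by apply/eqP => ?; subst; rewrite hx in n4.
  by rewrite !orbF.
rewrite E; move: D; rewrite /deg (cardsD1 p1) inE h1 /=; lia.
Qed.

Lemma good_deg v p1 p2 p3 p4 : uniq [:: v;p1;p2;p3;p4] ->
  e v p1 -> e p1 p2 -> e p2 p3 -> e p3 p4 -> deg e v <= 6.
Proof.
move=> U h1 h2 h3 h4; rewrite leqNgt; apply/negP => H7.
apply: (sparkle U h1 h2 h3 h4); rewrite cardsD.
have : #|nbhd e v :&: [set p1;p2;p3;p4]| <= 4.
  exact: leq_trans (subset_leq_card (subsetIr _ _)) (card4 _ _ _ _).
move: H7; rewrite /deg; lia.
Qed.

Lemma pick_from c a b d : 3 < deg e c -> exists x, [&& e c x, x != a, x != b & x != d].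
Proof.
move=> D.
have : 0 < #|nbhd e c :\: [set a;b;d]|.
  rewrite cardsD.
  have : #|nbhd e c :&: [set a;b;d]| <= 3.
    exact: leq_trans (subset_leq_card (subsetIr _ _)) (card3 _ _ _).
  move: D; rewrite /deg; lia.
rewrite card_gt0 => /set0Pn [x]; rewrite !inE negb_or negb_or => /andP[/andP[/andP[h1 h2] h3] h4].
by exists x; rewrite h1 h2 h3 h4.
Qed.

Definition NS (A : {set T}) := \bigcup_(x in A) nbhd e x.

Lemma card_NS (A : {set T}) : {in A, forall x, deg e x <= 6} -> #|NS A| <= 6 * #|A|.
Proof.
move=> H; apply: (@leq_trans (\sum_(x in A) #|nbhd e x|)).
  rewrite /NS; elim/big_rec2: _ => [|i m B _ IH]; first by rewrite cards0.
  by apply: leq_trans (cardU_le _ _) _; rewrite leq_add2l.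
rewrite mulnC -sum_nat_const; exact: leq_sum.
Qed.

Lemma escape (R : {set T}) x u : x \in R -> u \notin R -> connect e x u ->
  exists r w, [/\ r \in R, w \notin R & e r w].
Proof.
move=> xR uN /connectP[p Hp Hu]; elim: p x xR Hp Hu => [|z p IH] x xR /=.
  by move=> _ Hu; rewrite Hu xR in uN.
move=> /andP[exz Hp] Hu; case zR: (z \in R); first exact: (IH z).
by exists x, z; rewrite zR.
Qed.

Section C.
Variables y0 y1 y2 y3 y4 : T.
Hypothesis D4 : 3 < deg e y0.
Hypothesis U : uniq [:: y0;y1;y2;y3;y4].
Hypothesis h01 : e y0 y1.
Hypothesis h12 : e y1 y2.
Hypothesis h23 : e y2 y3.
Hypothesis h34 : e y3 y4.

Definition SS := [set y0;y1;y2;y3;y4] :|: nbhd e y0.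

Lemma typeA s q r w : s \in SS -> q \notin SS -> r \notin SS -> w \notin SS ->
  uniq [:: q;r;w] -> e s q -> e q r -> e r w -> False.
Proof.
move=> sS qN rN wN Uq esq eqr erw.
have sq : s != q by apply: contraNneq qN => <-.
have sr : s != r by apply: contraNneq rN => <-.
have sw : s != w by apply: contraNneq wN => <-.
have := U; rewrite /= !inE !negb_or => ?.
move: qN rN wN Uq; rewrite /SS /= !inE !negb_or => ? ? ? ?; bdecomp.
case: (boolP (e y0 s)) => hs.
  apply: (@sparkle2 y0 s q r w) => //.
  have ys : y0 != s by apply/eqP => E; rewrite -E eirr in hs.
  rewrite /= !inE !negb_or; neqtac.
move: sS; rewrite /SS !inE (negbTE hs) orbF.
case/orP => [/orP[/orP[/orP[|]|]|]|] /eqP Es; subst s.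
- match goal with H : is_true (~~ e y0 q) |- _ => by rewrite esq in H end.
- by rewrite h01 in hs.
- apply: (@sparkle2 y0 y1 y2 q r) => //; rewrite /= !inE !negb_or; neqtac.
- case: (boolP (e y0 y2)) => h02.
    apply: (@sparkle2 y0 y2 y3 q r) => //; rewrite /= !inE !negb_or; neqtac.
  apply: (@sparkle2 y0 y1 y2 y3 q) => //; rewrite /= !inE !negb_or; neqtac.
- case: (boolP (e y0 y3)) => h03.
    apply: (@sparkle2 y0 y3 y4 q r) => //; rewrite /= !inE !negb_or; neqtac.
  case: (boolP (e y0 y2)) => h02.
    apply: (@sparkle2 y0 y2 y3 y4 q) => //; rewrite /= !inE !negb_or; neqtac.
  apply: (@sparkle2 y0 y1 y2 y3 y4) => //; rewrite /= !inE !negb_or; neqtac.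
Qed.

Lemma S_path s : s \in SS -> exists p q r,
  [/\ p \in SS, q \in SS, r \in SS, uniq [:: s;p;q;r] & [/\ e s p, e p q & e q r]].
Proof.
have HU := U; rewrite /= !inE !negb_or in HU; bdecomp.
case: (boolP (s \in [set y0;y1;y2;y3;y4])) => sY; last first.
  rewrite /SS inE (negbTE sY) /= inE => hs.
  exists y0, y1, y2; rewrite !inE !eqxx ?orbT; split => //.
    move: sY; rewrite /= !inE !negb_or => ?; neqtac.
  by rewrite esym.
move: sY; rewrite !inE.
case/orP => [/orP[/orP[/orP[|]|]|]|] /eqP Es; subst s.
- exists y1, y2, y3; rewrite !inE !eqxx ?orbT; split => //; rewrite /= !inE !negb_or; neqtac.
- exists y2, y3, y4; rewrite !inE !eqxx ?orbT; split => //; rewrite /= !inE !negb_or; neqtac.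
- have [a /and4P[ha a1 a2 _]] := pick_from y1 y2 y2 D4.
  have a0 : a != y0 by apply/eqP => E; rewrite E eirr in ha.
  exists y1, y0, a; rewrite !inE !eqxx ha ?orbT; split => //.
    rewrite /= !inE !negb_or; neqtac.
  by split; rewrite // esym.
- exists y2, y1, y0; rewrite !inE !eqxx ?orbT; split => //.
    rewrite /= !inE !negb_or; neqtac.
  by split; rewrite // esym.
- exists y3, y2, y1; rewrite !inE !eqxx ?orbT; split => //.
    rewrite /= !inE !negb_or; neqtac.
  by split; rewrite // esym.
Qed.

Lemma card5 : #|[set y0;y1;y2;y3;y4]| <= 5.
Proof.
apply: (leq_trans (cardU_le _ _)); rewrite cards1 addn1 ltnS.
exact: card4.
Qed.

Lemma key : 474 <= #|T| -> connected_graph e -> {in SS, forall v, deg e v <= 6} -> False.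
Proof.
move=> HN conn H.
have y0S : y0 \in SS by rewrite !inE eqxx.
have dS : #|SS| <= 11.
  apply: leq_trans (cardU_le _ _) _.
  have := H _ y0S; rewrite /deg => ?; have := card5; lia.
have dN : {in NS SS, forall v, deg e v <= 6}.
  move=> v vN; case vS: (v \in SS); first exact: H.
  move/bigcupP: vN => [s sS]; rewrite inE => esv.
  have [p [q [r [pS qS rS Us [e1 e2 e3]]]]] := S_path sS.
  apply: (@good_deg v s p q r) => //; last by rewrite esym.
  rewrite cons_uniq Us andbT; apply: contraFN vS.
  by rewrite !in_cons in_nil orbF => /or4P[] /eqP ->.
have d1 := card_NS H; have d2 := card_NS dN.
pose R := SS :|: NS SS :|: NS (NS SS).
have dR : #|R| <= 473.
  apply: leq_trans (cardU_le _ _) _; apply: leq_trans (leq_add (cardU_le _ _) (leqnn _)) _.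
  lia.
have [u _ uN] : exists2 u, u \in [set: T] & u \notin R.
  apply/subsetPn; apply/negP => sub; have := subset_leq_card sub; rewrite cardsT; lia.
have y0R : y0 \in R by apply/setUP; left; apply/setUP; left.
have [r [w [rR wN erw]]] := escape y0R uN (conn y0 u).
have wS : w \notin SS by apply: contra wN => h; apply/setUP; left; apply/setUP; left.
have wN1 : w \notin NS SS by apply: contra wN => h; apply/setUP; left; apply/setUP; right.
have wN2 : w \notin NS (NS SS) by apply: contra wN => h; apply/setUP; right.
case rS: (r \in SS).
  by move/negP: wN1; apply; apply/bigcupP; exists r; [rewrite rS | rewrite inE].
case rN: (r \in NS SS).
  by move/negP: wN2; apply; apply/bigcupP; exists r; [rewrite rN | rewrite inE].
move/setUP: rR => [/setUP[]|]; [by rewrite rS | by rewrite rN |].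
move=> /bigcupP [q qN]; rewrite inE => eqr.
have qS : q \notin SS.
  apply/negP => qS.
  have : r \in NS SS by apply/bigcupP; exists q => //; rewrite inE.
  by rewrite rN.
move: (qN) => /bigcupP [s sS]; rewrite inE => esq.
apply: (@typeA s q r w) => //; first by rewrite rS.
rewrite /= !inE !negb_or.
have qr : q != r by apply: contraFneq rN => <-.
have qw : q != w by apply: contraNneq wN1 => <-.
have rw : r != w by apply/eqP => E; rewrite E eirr in erw.
by rewrite qr qw rw.
Qed.

Lemma Xle2 : #|nbhd e y0 :\: [set y1;y2;y3;y4]| <= 2.
Proof. by rewrite leqNgt; apply/negP; exact: (sparkle U h01 h12 h23 h34). Qed.

Lemma degsub : ~~ e y0 y3 -> ~~ e y0 y4 ->
  deg e y0 <= (e y0 y2) + 1 + #|nbhd e y0 :\: [set y1;y2;y3;y4]|.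
Proof.
move=> n3 n4.
case: (boolP (e y0 y2)) => h2.
  have : nbhd e y0 \subset [set y1; y2] :|: (nbhd e y0 :\: [set y1;y2;y3;y4]).
    apply/subsetP => x; rewrite !inE => hx; rewrite hx andbT.
    case: (x =P y3) => [E|_]; first by rewrite -E hx in n3.
    case: (x =P y4) => [E|_]; first by rewrite -E hx in n4.
    by case: (x == y1); case: (x == y2).
  move/subset_leq_card => /leq_trans; apply.
  apply: leq_trans (cardU_le _ _) _.
  apply: leq_add => //; apply: leq_trans (cardU_le _ _) _; by rewrite !cards1.
have : nbhd e y0 \subset [set y1] :|: (nbhd e y0 :\: [set y1;y2;y3;y4]).
  apply/subsetP => x; rewrite !inE => hx; rewrite hx andbT.
  case: (x =P y3) => [E|_]; first by rewrite -E hx in n3.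
  case: (x =P y4) => [E|_]; first by rewrite -E hx in n4.
  case: (x =P y2) => [E|_]; first by rewrite -E hx in h2.
  by case: (x == y1).
move/subset_leq_card => /leq_trans; apply.
apply: leq_trans (cardU_le _ _) _; by rewrite cards1.
Qed.

Lemma goodS : deg e y2 <= 6 -> {in SS, forall v, deg e v <= 6}.
Proof.
move=> d2 v.
have HU := U; rewrite /= !inE !negb_or in HU; bdecomp.
case: (boolP (v \in [set y0;y1;y2;y3;y4])) => vY; last first.
  rewrite /SS inE (negbTE vY) /= inE => hv.
  move: vY; rewrite !inE !negb_or => ?; bdecomp.
  have v0 : v != y0 by apply/eqP => E; rewrite E eirr in hv.
  apply: (@good_deg v y0 y1 y2 y3) => //; first by rewrite /= !inE !negb_or; neqtac.
  by rewrite esym.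
move: vY; rewrite !inE => vY _.
case/orP: vY => [/orP[/orP[/orP[|]|]|]|] /eqP Es; subst v.
- by apply: (@good_deg y0 y1 y2 y3 y4).
- case: (boolP (e y0 y2)) => h02.
    apply: (@good_deg y1 y0 y2 y3 y4) => //; last by rewrite esym.
    rewrite /= !inE !negb_or; neqtac.
  case: (boolP (e y0 y4)) => h04.
    apply: (@good_deg y1 y0 y4 y3 y2) => //; try by rewrite esym.
    rewrite /= !inE !negb_or; neqtac.
  case: (boolP (e y0 y3)) => h03.
    have [a /and4P[ha a1 a2 a3]] := pick_from y1 y2 y3 D4.
    have a0 : a != y0 by apply/eqP => E; rewrite E eirr in ha.
    have a4 : a != y4 by apply/eqP => E; rewrite -E ha in h04.
    apply: (@good_deg y1 y2 y3 y0 a) => //; try by rewrite esym.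
    rewrite /= !inE !negb_or; neqtac.
  have H := leq_trans (degsub h03 h04) (leq_add (leqnn _) Xle2).
  by rewrite (negbTE h02) in H; have := leq_trans D4 H.
- exact: d2.
- have [a /and4P[ha a1 a2 a3]] := pick_from y1 y2 y3 D4.
  have a0 : a != y0 by apply/eqP => E; rewrite E eirr in ha.
  apply: (@good_deg y3 y2 y1 y0 a) => //; try by rewrite esym.
  rewrite /= !inE !negb_or; neqtac.
- apply: (@good_deg y4 y3 y2 y1 y0) => //; try by rewrite esym.
  rewrite /= !inE !negb_or; neqtac.
Qed.

Lemma conclusion : 474 <= #|T| -> connected_graph e ->
      [/\ deg e y0 = 4,
          [/\ e y0 y2, ~~ e y0 y3 & ~~ e y0 y4] &
          forall y' y'' : T, nbhd e y0 = [set y1; y2; y'; y''] ->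
            ~~ e y1 y' /\ ~~ e y1 y''].
Proof.
move=> HN conn.
have K : deg e y2 <= 6 -> False by move=> h; exact: (key HN conn (goodS h)).
have HU := U; rewrite /= !inE !negb_or in HU; bdecomp.
have no3 : ~~ e y0 y3.
  apply/negP => h; apply: K; apply: (@good_deg y2 y1 y0 y3 y4) => //; try by rewrite esym.
  rewrite /= !inE !negb_or; neqtac.
have no4 : ~~ e y0 y4.
  apply/negP => h; apply: K; apply: (@good_deg y2 y1 y0 y4 y3) => //; try by rewrite esym.
  rewrite /= !inE !negb_or; neqtac.
have H := leq_trans (degsub no3 no4) (leq_add (leqnn _) Xle2).
have e02 : e y0 y2.
  by apply/negPn/negP => h02; rewrite (negbTE h02) in H; have := leq_trans D4 H.
rewrite e02 in H.
have d4 : deg e y0 = 4 by apply/eqP; rewrite eqn_leq H D4.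
split => // y' y'' Hn.
have C4 : #|[:: y1; y2; y'; y'']| = 4.
  rewrite -d4 /deg Hn; apply: eq_card => x; rewrite !inE.
  by rewrite ?orbF !orbA.
have /card_uniqP := C4; rewrite /= !inE !negb_or => U4; bdecomp.
have i' : e y0 y'.
  have : y' \in nbhd e y0 by rewrite Hn !inE eqxx !orbT.
  by rewrite inE.
have i'' : e y0 y''.
  have : y'' \in nbhd e y0 by rewrite Hn !inE eqxx !orbT.
  by rewrite inE.
have a' : y' != y0 by apply/eqP => E; rewrite E eirr in i'.
have a'' : y'' != y0 by apply/eqP => E; rewrite E eirr in i''.
split; apply/negP => h; apply: K.
  apply: (@good_deg y2 y1 y' y0 y'') => //; try by rewrite esym.
  rewrite /= !inE !negb_or; neqtac.
apply: (@good_deg y2 y1 y'' y0 y') => //; try by rewrite esym.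
rewrite /= !inE !negb_or; neqtac.
Qed.

End C.
End G.

Theorem lemma4 :
  exists N : nat,
  forall (T : finType) (e : rel T),
    simple_graph e -> connected_graph e -> (N <= #|T|)%N ->
    ~ contains_S44 e ->
    forall y0 y1 y2 y3 y4 : T,
      (4 <= deg e y0)%N ->
      uniq [:: y0; y1; y2; y3; y4] ->
      e y0 y1 -> e y1 y2 -> e y2 y3 -> e y3 y4 ->
      [/\ deg e y0 = 4,
          [/\ e y0 y2, ~~ e y0 y3 & ~~ e y0 y4] &
          forall y' y'' : T, nbhd e y0 = [set y1; y2; y'; y''] ->
            ~~ e y1 y' /\ ~~ e y1 y''].
Proof.
exists 474 => T e [esym eirr] conn HN noS y0 y1 y2 y3 y4 D4 U h01 h12 h23 h34.
exact: (conclusion esym eirr noS D4 U h01 h12 h23 h34 HN conn).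
Qed.
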